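(* Let $d>0$, $N\ge 1$, let $\mathcal{S}=\{s_1,s_2,s_3,s_4\}$ be the 4-PAM constellation with $s_1=-3d$, $s_2=-d$, $s_3=d$, $s_4=3d$, labeled by any Gray labeling. For any two distinct sequences $\boldsymbol{x},\hat{\boldsymbol{x}}\in\mathcal{S}^N$, the asymptotic loss satisfies $\mathsf{L}(\boldsymbol{x},\hat{\boldsymbol{x}})\le 1.25$ dB.
   Context: A labeling is a bijection $\Phi_{\mathcal{S}}:\{0,1\}^2\to\mathcal{S}$, described by $\boldsymbol{q}=[q_1,q_2,q_3,q_4]$, where $q_i$ is the integer whose two-bit binary representation (most significant bit first) is $\Phi_{\mathcal{S}}^{-1}(s_i)$. The Gray labelings are $[0,1,3,2]$, $[0,2,3,1]$, $[1,0,2,3]$, $[2,0,1,3]$. For $\boldsymbol{x}=[x[1],\dots,x[N]]$, $\hat{\boldsymbol{x}}=[\hat{x}[1],\dots,\hat{x}[N]]\in\mathcal{S}^N$ and each $k$ with $x[k]\neq\hat{x}[k]$, define $\mu^{\mathcal{X}}_k=\sigma^{2,\mathcal{X}}_k=(x[k]-\hat{x}[k])^2/(4d^2)$ (so equal to 1, 4 or 9), and define $\mu^{\mathcal{B}}_k=\sigma^{2,\mathcal{B}}_k=(x[k]-\hat{x}[k])^2/(4d^2)$ except when $\{x[k],\hat{x}[k]\}=\{s_1,s_4\}$, in which case $\mu^{\mathcal{B}}_k=3$ and $\sigma^{2,\mathcal{B}}_k=1$. With sums over all $k$ such that $x[k]\neq\hat{x}[k]$, the normalized distances are $a^{\mathcal{X}}(\boldsymbol{x},\hat{\boldsymbol{x}})=\sum_k\mu^{\mathcal{X}}_k/\sqrt{\sum_k\sigma^{2,\mathcal{X}}_k}$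 (symbol-wise ML decoder) and $a^{\mathcal{B}}(\boldsymbol{x},\hat{\boldsymbol{x}})=\sum_k\mu^{\mathcal{B}}_k/\sqrt{\sum_k\sigma^{2,\mathcal{B}}_k}$ (bit-wise max-log decoder under the zero-crossing Gaussian approximation of the L-values), and the asymptotic loss (in dB) of the bit-wise decoder relative to the symbol-wise decoder is $\mathsf{L}(\boldsymbol{x},\hat{\boldsymbol{x}})=20\log_{10}\big(a^{\mathcal{X}}(\boldsymbol{x},\hat{\boldsymbol{x}})/a^{\mathcal{B}}(\boldsymbol{x},\hat{\boldsymbol{x}})\big)$. (The pairwise error probabilities are $Q(a\,d/\sigma_z)$ with $a$ the respective normalized distance.) *)

(* Defs.v *)
From mathcomp Require Import all_boot all_order all_algebra.
From mathcomp Require Import reals exp.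
Set Implicit Arguments. Unset Strict Implicit. Unset Printing Implicit Defensive.
Import Order.TTheory GRing.Theory Num.Theory.
Local Open Scope ring_scope.

(* 4-PAM constellation: symbol index i : 'I_4 (i = 0..3 stands for s_1..s_4),
   s_{i+1} = (2 i - 3) d, i.e. -3d, -d, d, 3d. *)
Definition pam4 {R : realType} (d : R) (i : 'I_4) : R :=
  ((2 * (i : nat))%:R - 3) * d.

(* A labeling is described by q = [q_1;q_2;q_3;q_4], q_i = Phi^{-1}(s_i) as an integer. *)
Definition is_gray_labeling (q : 'I_4 -> 'I_4) : bool :=
  [seq (q i : nat) | i <- enum 'I_4] \in
    [:: [:: 0; 1; 3; 2]; [:: 0; 2; 3; 1]; [:: 1; 0; 2; 3]; [:: 2; 0; 1; 3]]%N.

Definition outer_pair (a b : 'I_4) : bool :=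
  ((a : nat) == 0%N) && ((b : nat) == 3%N) || ((a : nat) == 3%N) && ((b : nat) == 0%N).

Definition muX {R : realType} (d : R) (a b : 'I_4) : R :=
  (pam4 d a - pam4 d b) ^+ 2 / (4 * d ^+ 2).
Definition sig2X {R : realType} (d : R) (a b : 'I_4) : R := muX d a b.
Definition muB {R : realType} (d : R) (a b : 'I_4) : R :=
  if outer_pair a b then 3 else muX d a b.
Definition sig2B {R : realType} (d : R) (a b : 'I_4) : R :=
  if outer_pair a b then 1 else muX d a b.

Definition aX {R : realType} (d : R) (N : nat) (x xh : 'I_N -> 'I_4) : R :=
  (\sum_(k < N | x k != xh k) muX d (x k) (xh k)) /
    Num.sqrt (\sum_(k < N | x k != xh k) sig2X d (x k) (xh k)).
Definition aB {R : realType} (d : R) (N : nat) (x xh : 'I_N -> 'I_4) : R :=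
  (\sum_(k < N | x k != xh k) muB d (x k) (xh k)) /
    Num.sqrt (\sum_(k < N | x k != xh k) sig2B d (x k) (xh k)).

Definition log10 {R : realType} (x : R) : R := ln x / ln 10.

Definition asym_loss {R : realType} (d : R) (N : nat) (x xh : 'I_N -> 'I_4) : R :=
  20 * log10 (aX d x xh / aB d x xh).

(* Main.v *)
Require Import Defs.
From mathcomp Require Import all_boot all_order all_algebra.
From mathcomp Require Import reals exp.
From mathcomp Require Import ring lra.
From Stdlib Require Import FunctionalExtensionality Classical.
Import Order.TTheory GRing.Theory Num.Theory.
Local Open Scope ring_scope.

Lemma muX_nat (R : realType) (d : R) (a b : 'I_4) : 0 < d ->
  muX d a b = ((a : nat)%:R - (b : nat)%:R) ^+ 2.
Proof.
move=> d0; rewrite /muX /pam4 !natrM.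
have dn : d != 0 by rewrite gt_eqF.
by field; rewrite ?mulf_neq0 ?expf_neq0.
Qed.

Lemma muX_outer (R : realType) (d : R) (a b : 'I_4) : 0 < d ->
  outer_pair a b -> muX d a b = 9.
Proof.
move=> d0; rewrite muX_nat // /outer_pair.
by case/orP=> /andP[/eqP -> /eqP ->]; rewrite /= ?sub0r ?subr0 ?sqrrN; ring.
Qed.

Lemma muX_pos (R : realType) (d : R) (a b : 'I_4) : 0 < d ->
  a != b -> 0 < muX d a b.
Proof.
move=> d0 ab; rewrite muX_nat // exprn_even_gt0 //= subr_eq0.
by apply: contra ab; rewrite eqr_nat => /eqP h; apply/eqP/val_inj.
Qed.

Lemma muX_ge0 (R : realType) (d : R) (a b : 'I_4) : 0 < d -> 0 <= muX d a b.
Proof. by move=> d0; rewrite muX_nat // sqr_ge0. Qed.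

Lemma ln10_gt0 (R : realType) : 0 < ln (10 : R).
Proof. by apply: ln_gt0; rewrite ltr1n. Qed.

Lemma l8 (R : realType) : ln (4 / 3 : R) *+ 8 <= ln 10.
Proof.
have p : (0 : R) < 4 / 3 by rewrite divr_gt0 // ltr_nat.
rewrite -lnXn //.
have p8 : (0 : R) < (4 / 3) ^+ 8 by apply: exprn_gt0.
have p10 : (0 : R) < 10 by rewrite ltr0n.
rewrite ler_ln; [| exact: p8 | exact: p10].
have -> : (4 / 3 : R) ^+ 8 = (256 / 81) * (256 / 81) by field.
lra.
Qed.

Theorem theorem1 (R : realType) (d : R) (N : nat) (q : 'I_4 -> 'I_4)
  (x xh : 'I_N -> 'I_4) :
  0 < d -> (1 <= N)%N -> is_gray_labeling q -> x <> xh ->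
  asym_loss d x xh <= 125 / 100.
Proof.
move=> d0 _ _ xne.
pose u (a b : 'I_4) : R := if outer_pair a b then 0 else muX d a b.
pose o (a b : 'I_4) : R := if outer_pair a b then 1 else 0.
pose A := \sum_(k < N | x k != xh k) u (x k) (xh k).
pose m := \sum_(k < N | x k != xh k) o (x k) (xh k).
have dec : forall c c' : R, (forall a b, outer_pair a b -> muX d a b = c) ->
   \sum_(k < N | x k != xh k) (if outer_pair (x k) (xh k) then c' else muX d (x k) (xh k))
   = A + m * c'.
  move=> c c' _; rewrite /A /m mulr_suml -big_split /=; apply: eq_bigr => k _.
  by rewrite /u /o; case: ifP; rewrite ?mul1r ?mul0r ?add0r ?addr0.
have hS : \sum_(k < N | x k != xh k) muX d (x k) (xh k) = A + m * 9.
  rewrite -(dec 9 9) //; last by move=> a b; apply: muX_outer.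
  by apply: eq_bigr => k _; case: ifP => // h; rewrite muX_outer.
have hM : \sum_(k < N | x k != xh k) muB d (x k) (xh k) = A + m * 3.
  by rewrite -(dec 9 3) //; move=> a b; apply: muX_outer.
have hV : \sum_(k < N | x k != xh k) sig2B d (x k) (xh k) = A + m * 1.
  by rewrite -(dec 9 1) //; move=> a b; apply: muX_outer.
have A0 : 0 <= A by apply: sumr_ge0 => k _; rewrite /u; case: ifP => // _; apply: muX_ge0.
have m0 : 0 <= m by apply: sumr_ge0 => k _; rewrite /o; case: ifP.
have [k0 hk0] : exists k, x k != xh k.
  apply: NNPP => hn; apply: xne; apply: functional_extensionality => k.
  apply/eqP; apply: contraT => hk; exfalso; apply: hn; by exists k.
have Spos : 0 < A + m * 9.
  rewrite -hS (bigD1 k0) //=; apply: ltr_pwDl; first exact: muX_pos.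
  by apply: sumr_ge0 => k _; apply: muX_ge0.
set S := A + m * 9 in Spos hS.
have Mpos : 0 < A + m * 3 by rewrite /S in Spos; lra.
have Vpos : 0 < A + m * 1 by rewrite /S in Spos; lra.
have aXE : aX d x xh = Num.sqrt S.
  have sp : Num.sqrt S != 0 by rewrite gt_eqF // sqrtr_gt0.
  rewrite /aX /sig2X hS; apply: (mulIf sp).
  rewrite divfK ?gt_eqF ?sqrtr_gt0 // -expr2 sqr_sqrtr //; exact: ltW.
have aBE : aB d x xh = (A + m * 3) / Num.sqrt (A + m * 1).
  by rewrite /aB hM hV.
set r := aX d x xh / aB d x xh.
have rpos : 0 < r.
  by rewrite /r aXE aBE !divr_gt0 ?sqrtr_gt0.
have r2 : r ^+ 2 <= 4 / 3.
  have S0 : 0 <= S by exact: ltW.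
  have V0 : 0 <= A + m * 1 by exact: ltW.
  rewrite /r aXE aBE expr_div_n expr_div_n !sqr_sqrtr //.
  rewrite invf_div mulrA ler_pdivrMr ?exprn_gt0 //.
  rewrite /S -subr_ge0.
  have -> : 4 / 3 * (A + m * 3) ^+ 2 - (A + m * 9) * (A + m * 1) = (A - m * 3) ^+ 2 / 3.
    by field.
  by rewrite divr_ge0 ?sqr_ge0.
have l10 := ln10_gt0 R.
have l43 : ln (r ^+ 2) <= ln (4 / 3 : R).
  have p43 : (0 : R) < 4 / 3 by rewrite divr_gt0 // ltr0n.
  have pr2 : 0 < r ^+ 2 by apply: exprn_gt0.
  by rewrite ler_ln; [exact: r2 | exact: pr2 | exact: p43].
have l8 := l8 R.
rewrite lnXn // in l43.
have -> : asym_loss d x xh = 20 * ln r / ln 10 by rewrite /asym_loss /log10 -/r mulrA.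
rewrite ler_pdivrMr; last exact: l10.
rewrite -mulr_natr in l43; rewrite -mulr_natr in l8.
move: l10 l43 l8; move: (ln r) (ln (4/3 : R)) (ln (10 : R)).
clear; move=> a b c *; lra.
Qed.
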